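(* Every distinguished variety in $\mathbb G_n$ is polynomially convex.
   Context: $\mathbb G_n=\pi_n(\mathbb D^n)$, $\Gamma_n=\pi_n(\overline{\mathbb D}^n)$, $b\Gamma_n=\pi_n(\mathbb T^n)$, where $\pi_n(z)=(e_1(z),\dots,e_{n-1}(z),z_1\cdots z_n)$ with $e_k$ the elementary symmetric polynomials. A distinguished variety in $\mathbb G_n$ is a set $\Lambda=V\cap\mathbb G_n$, $V$ the common zero set of some set of polynomials, such that $\overline{\Lambda}\cap\partial\Gamma_n=\overline{\Lambda}\cap b\Gamma_n$. *)

(* Defs.v *)
From HB Require Import structures.
From mathcomp Require Import all_boot all_order all_algebra.
From mathcomp Require Import all_classical all_reals all_analysis.
From mathcomp Require Import complex.
From mathcomp Require mpoly.
Import Order.TTheory GRing.Theory Num.Theory.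
Import numFieldTopology.Exports numFieldNormedType.Exports.

Set Implicit Arguments.
Unset Strict Implicit.
Unset Printing Implicit Defensive.

Local Open Scope ring_scope.
Local Open Scope classical_set_scope.

(* Topology of C = R[i]: the metric topology given by the complex modulus. *)
HB.instance Definition _ (R : rcfType) := PseudoPointedMetric.copy R[i] (R[i])^o.

Section Symmetrized.
Variables (R : realType) (n : nat).

Local Notation Cn := 'rV[R[i]]_n.

Definition esymf (k : nat) (z : Cn) : R[i] :=
  \sum_(S : {set 'I_n} | #|S| == k) \prod_(i in S) z ord0 i.

Definition pi_n (z : Cn) : Cn :=
  \row_(k < n) (if k.+1 == n then \prod_(i < n) z ord0 i else esymf k.+1 z).

Definition open_polydisc : set Cn := [set z | forall i, `|z ord0 i| < 1].
Definition closed_polydisc : set Cn := [set z | forall i, `|z ord0 i| <= 1].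
Definition torus_n : set Cn := [set z | forall i, `|z ord0 i| = 1].

Definition G_n : set Cn := pi_n @` open_polydisc.
Definition Gamma_n : set Cn := pi_n @` closed_polydisc.
Definition bGamma_n : set Cn := pi_n @` torus_n.

Definition tboundary (A : set Cn) : set Cn := closure A `\` interior A.

Definition peval (p : mpoly.mpoly n R[i]) (z : Cn) : R[i] :=
  mpoly.meval (fun i => z ord0 i) p.

Definition zero_set (S : set (mpoly.mpoly n R[i])) : set Cn :=
  [set z | forall p, S p -> peval p z = 0].

Definition distinguished_variety (L : set Cn) : Prop :=
  exists S : set (mpoly.mpoly n R[i]),
    L = zero_set S `&` G_n /\
    closure L `&` tboundary Gamma_n = closure L `&` bGamma_n.

Definition poly_hull (K : set Cn) : set Cn :=
  [set z | forall (p : mpoly.mpoly n R[i]) (M : R),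
     (forall w, K w -> `|peval p w| <= (M%:C)%C) -> `|peval p z| <= (M%:C)%C].

(* polynomial convexity of a (not necessarily compact) set X *)
Definition poly_convex (X : set Cn) : Prop :=
  forall K : set Cn, K `<=` X -> compact K -> poly_hull K `<=` X.

End Symmetrized.

(* Main.v *)
Require Import Defs.
From HB Require Import structures.
From mathcomp Require Import all_boot all_order all_algebra.
From mathcomp Require Import all_classical all_reals all_analysis.
From mathcomp Require Import complex.
From mathcomp Require mpoly.
Import numFieldTopology.Exports numFieldNormedType.Exports.
Local Open Scope ring_scope.
Local Open Scope classical_set_scope.

Import -(notations) mpoly.
From mathcomp Require Import zify lra.
Import Order.TTheory GRing.Theory Num.Theory.
Set Implicit Arguments. Unset Strict Implicit.

Section SerInv.
Variable F : comNzRingType.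
Implicit Types (A B Q : {poly F}).

Definition eqm (m : nat) A B := forall k, (k <= m)%N -> A`_k = B`_k.

Lemma eqm_mul m A A' B B' : eqm m A A' -> eqm m B B' -> eqm m (A * B) (A' * B').
Proof.
move=> hA hB k km; rewrite !coefM; apply: eq_bigr => i _.
rewrite hA ?hB //; first exact: leq_trans (leq_subr _ _) km.
exact: leq_trans (ltnSE (ltn_ord i)) km.
Qed.

Lemma eqm_sym m A B : eqm m A B -> eqm m B A.
Proof. by move=> h k km; rewrite h. Qed.

Lemma eqm_trans m A B D : eqm m A B -> eqm m B D -> eqm m A D.
Proof. by move=> h1 h2 k km; rewrite h1 // h2. Qed.

Lemma eqm_le m m' A B : (m' <= m)%N -> eqm m A B -> eqm m' A B.
Proof. by move=> le h k km; apply: h; exact: leq_trans km le. Qed.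

Definition Sser Q m := \sum_(j < m.+1) (1 - Q) ^+ j.
Definition ainv Q m := (Sser Q m)`_m.

Lemma coef_pow_small Q : Q`_0 = 1 -> forall j k, (k < j)%N -> ((1 - Q) ^+ j)`_k = 0.
Proof.
move=> Q0; elim=> [|j IH] k //= kj.
rewrite exprS coefM big_ord_recl /= subn0 coefB coef1 Q0 subrr mul0r add0r.
apply: big1 => i _; rewrite IH ?mulr0 //.
by rewrite /bump /= add1n subnSK //; rewrite -ltnS (leq_ltn_trans (leq_subr _ _)).
Qed.

Lemma Sser_inv Q m : Q`_0 = 1 -> eqm m (Q * Sser Q m) 1.
Proof.
move=> Q0; have -> : Q * Sser Q m = 1 - (1 - Q) ^+ m.+1.
  have h := subrX1 (1 - Q) m.+1; rewrite /Sser.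
  by apply: oppr_inj; rewrite opprB h addrAC subrr add0r mulNr.
by move=> k km; rewrite coefB coef_pow_small // subr0.
Qed.

Lemma ainv_uniq Q B m : Q`_0 = 1 -> eqm m (Q * B) 1 ->
  forall k, (k <= m)%N -> B`_k = ainv Q k.
Proof.
move=> Q0 h k km.
have e1 : eqm k (B * 1) (B * (Q * Sser Q k)).
  apply: eqm_mul => //; apply: eqm_sym; exact: Sser_inv.
have e2 : eqm k ((Q * B) * Sser Q k) (1 * Sser Q k).
  by apply: eqm_mul => //; exact: eqm_le km h.
by rewrite /ainv -[B]mulr1 e1 // mulrCA mulrA e2 // mul1r.
Qed.

Lemma Sser_coef Q m k : Q`_0 = 1 -> (k <= m)%N -> (Sser Q m)`_k = ainv Q k.
Proof. by move=> Q0; apply: ainv_uniq => //; exact: Sser_inv. Qed.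

Lemma ainvM Q1 Q2 m : Q1`_0 = 1 -> Q2`_0 = 1 ->
  ainv (Q1 * Q2) m = \sum_(j < m.+1) ainv Q1 j * ainv Q2 (m - j).
Proof.
move=> h1 h2.
have h12 : (Q1 * Q2)`_0 = 1 by rewrite coefM big_ord1 h1 h2 mulr1.
rewrite -(@ainv_uniq _ (Sser Q1 m * Sser Q2 m) m) //; last first.
  rewrite mulrACA -[1](mulr1 1); apply: eqm_mul; exact: Sser_inv.
rewrite coefM; apply: eq_bigr => j _; rewrite !Sser_coef //.
  exact: leq_subr.
exact: ltnSE (ltn_ord j).
Qed.

Lemma ainv_lin (mu : F) m : ainv (1 - mu *: 'X) m = mu ^+ m.
Proof.
rewrite /ainv /Sser opprB addrC subrK coef_sum.
rewrite (bigD1 ord_max) //= exprZn coefZ coefXn eqxx mulr1 big1 ?addr0 //.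
move=> i hi; rewrite exprZn coefZ coefXn.
suff -> : (m == i) = false by rewrite mulr0.
by apply/negbTE; apply: contra hi => /eqP e; apply/eqP/val_inj; rewrite /= -e.
Qed.

Lemma ainv1 m : ainv 1 m = (m == 0)%:R.
Proof.
rewrite /ainv /Sser subrr big_ord_recl expr0 big1 ?addr0 ?coef1 //.
by move=> i _; rewrite expr0n.
Qed.

End SerInv.

Section Bounds.
Variable F : numFieldType.

Lemma prod_lin_coef0 k (mu : 'I_k -> F) : (\prod_(i < k) (1 - mu i *: 'X))`_0 = 1.
Proof.
rewrite -horner_coef0 horner_prod; apply: big1 => i _.
by rewrite hornerD hornerN hornerZ hornerX mulr0 subr0 hornerC.
Qed.

Lemma lin_coef0 (c : F) : (1 - c *: 'X)`_0 = 1.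
Proof. by rewrite coefB coef1 coefZ coefX mulr0 subr0. Qed.

Lemma geom_bound (r rho : F) m : 0 <= r -> r < rho ->
  \sum_(j < m.+1) r ^+ j * rho ^+ (m - j) <= rho ^+ m.+1 / (rho - r).
Proof.
move=> r0 rrho; have d0 : 0 < rho - r by rewrite subr_gt0.
rewrite ler_pdivlMr //.
have := subrXX rho r m.+1; rewrite /= => h.
have -> : \sum_(j < m.+1) r ^+ j * rho ^+ (m - j) =
          \sum_(i < m.+1) rho ^+ (m - i) * r ^+ i.
  by apply: eq_bigr => i _; rewrite mulrC.
rewrite mulrC -h lerBlDr lerDl exprn_ge0 //.
Qed.

Lemma ainv_prod_bound k (mu : 'I_k -> F) (r rho : F) :
  0 <= r -> r < rho -> (forall i, `|mu i| <= r) ->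
  forall m, `|ainv (\prod_(i < k) (1 - mu i *: 'X)) m| <= (rho / (rho - r)) ^+ k * rho ^+ m.
Proof.
move=> r0 rrho; have rho0 : 0 < rho by apply: le_lt_trans rrho.
have d0 : 0 < rho - r by rewrite subr_gt0.
elim: k mu => [|k IH] mu hmu m.
  rewrite big_ord0 ainv1 expr0 mul1r.
  by case: m => [|m] /=; rewrite ?normr1 ?expr0 // normr0 exprn_ge0 // ltW.
rewrite big_ord_recr /= mulrC ainvM ?lin_coef0 ?prod_lin_coef0 //.
apply: (le_trans (ler_norm_sum _ _ _)).
apply: (@le_trans _ _ (\sum_(j < m.+1) (rho / (rho - r)) ^+ k * (r ^+ j * rho ^+ (m - j)))).
  apply: ler_sum => j _; rewrite normrM ainv_lin normrX mulrCA.
  apply: ler_pM; rewrite ?exprn_ge0 ?normr_ge0 //.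
    by apply: lerXn2r; rewrite ?nnegrE ?normr_ge0 // hmu.
  exact: (IH (fun i => mu (widen_ord (leqnSn k) i))).
rewrite -mulr_sumr exprS -mulrA mulrCA ler_pM2l ?exprn_gt0 ?divr_gt0 //.
apply: (le_trans (geom_bound m r0 rrho)).
by rewrite exprS mulrAC mulrC.
Qed.

End Bounds.

Section BigRoot.
Variable F : numFieldType.

Lemma prodP_lin_coef0 k (P : pred 'I_k) (mu : 'I_k -> F) :
  (\prod_(i < k | P i) (1 - mu i *: 'X))`_0 = 1.
Proof.
rewrite -horner_coef0 horner_prod; apply: big1 => i _.
by rewrite hornerD hornerN hornerZ hornerX mulr0 subr0 hornerC.
Qed.

Lemma big_root_lower k (lam : 'I_k -> F) i0 (D rho : F) :
  1 <= `|lam i0| -> 0 <= rho -> rho <= 1 ->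
  (forall m, `|ainv (\prod_(i < k) (1 - lam i *: 'X)) m| <= D * rho ^+ m) ->
  exists W : F, forall N, 1 <= W * rho ^+ N.
Proof.
move=> hl r0 r1 hb.
have D0 : 0 <= D by have := hb 0%N; rewrite expr0 mulr1; apply: le_trans.
pose Q : {poly F} := \prod_(i < k) (1 - lam i *: 'X).
rewrite -/Q in hb.
pose Q' : {poly F} := \prod_(i < k | i != i0) (1 - lam i *: 'X).
have Q0 : Q`_0 = 1 by rewrite prod_lin_coef0.
have QE : Q = (1 - lam i0 *: 'X) * Q' by rewrite /Q (bigD1 i0).
pose s := size Q'.
exists ((\sum_(j < s) `|Q'`_j|) * D) => N.
pose m := (N + s)%N.
have e : eqm m ((1 - lam i0 *: 'X) * (Q' * Sser Q m)) 1.
  by rewrite mulrA -QE; apply: Sser_inv.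
have := ainv_uniq (lin_coef0 _) e (leqnn m); rewrite ainv_lin => hm.
have QQ : Q' = \sum_(j < s) Q'`_j *: 'X^j by rewrite -poly_def coefK.
have : `|lam i0 ^+ m| <= (\sum_(j < s) `|Q'`_j|) * D * rho ^+ N.
  rewrite -hm {1}QQ mulr_suml coef_sum.
  apply: (le_trans (ler_norm_sum _ _ _)).
  rewrite -mulrA mulr_suml; apply: ler_sum => j _.
  rewrite -scalerAl coefZ coefXnM.
  have js : (j <= m)%N by rewrite /m (leq_trans (ltnW (ltn_ord j))) // leq_addl.
  rewrite ltnNge js /= normrM ler_wpM2l //.
  rewrite (Sser_coef Q0 (leq_subr j m)).
  apply: (le_trans (hb _)); rewrite ler_wpM2l //.
  apply: ler_wiXn2l => //.
  by rewrite /m -addnBA ?leq_addr // ltnW.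
move=> h; apply: le_trans h; rewrite normrX; exact: exprn_ege1.
Qed.

End BigRoot.

Section Rev.
Variable F : comNzRingType.

Lemma rev_prod (cs : seq F) k :
  (\prod_(c <- cs) (1 - c *: 'X))`_k =
  if (k <= size cs)%N then (\prod_(c <- cs) ('X - c%:P))`_(size cs - k) else 0.
Proof.
elim: cs k => [|c cs IH] k.
  by rewrite !big_nil !coef1; case: k.
rewrite !big_cons /=.
set A := \prod_(c <- cs) _; set B := \prod_(c <- cs) _.
have sB : size B = (size cs).+1 by rewrite size_prod_XsubC.
have Bhi : B`_(size cs).+1 = 0 by rewrite nth_default // sB.
rewrite mulrBl mul1r coefB -scalerAl coefZ coefXM.
case: k => [|k].
  rewrite eqxx mulr0 subr0 IH leq0n subn0 -/B subn0.
  by rewrite mulrBl coefB coefXM /= mul_polyC coefZ Bhi mulr0 subr0.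
rewrite /= !IH -/B ltnS.
case: (ltngtP k (size cs)) => hk.
- rewrite mulrBl coefB coefXM mul_polyC coefZ subSS.
  have -> : (size cs - k == 0)%N = false by apply/negbTE; rewrite subn_eq0 -ltnNge.
  by rewrite subnS.
- by rewrite mulr0 subr0.
- rewrite subSS ?hk subnn mulrBl coefB coefXM mul_polyC coefZ /=.
  by rewrite !sub0r.
Qed.

End Rev.

Section Vieta.
Variables (R : realType) (n : nat).
Local Notation C := R[i].
Local Notation Cn := 'rV[C]_n.

Definition rowC (mu : 'I_n -> C) : Cn := \row_(i < n) mu i.

Lemma esymf_meval k (z : Cn) :
  esymf k z = mpoly.meval (fun i => z ord0 i) (mpoly.mesym n C k).
Proof.
rewrite /esymf /mpoly.mesym raddf_sum /=; apply: eq_bigr => S _.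
by rewrite rmorph_prod /=; apply: eq_bigr => i _; rewrite mpoly.mevalXU.
Qed.

Lemma esymf0 (z : Cn) : esymf 0 z = 1.
Proof. by rewrite esymf_meval mpoly.mesym0E rmorph1. Qed.

Lemma pi_coord (z : Cn) (k : 'I_n) : pi_n z ord0 k = esymf k.+1 z.
Proof.
rewrite /pi_n mxE; case: eqP => // e.
rewrite esymf_meval e mpoly.mesymnnE rmorph_prod /=.
by apply: eq_bigr => i _; rewrite mpoly.mevalXU.
Qed.

Lemma P1 (mu : 'I_n -> C) j :
  (\prod_(i < n) ('X - (mu i)%:P))`_j =
  if (j <= n)%N then (-1) ^+ (n - j) * esymf (n - j) (rowC mu) else 0.
Proof.
pose cs := [tuple mu i | i < n].
have -> : \prod_(i < n) ('X - (mu i)%:P) = \prod_(c <- cs) ('X - c%:P).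
  by rewrite big_tuple; apply: eq_bigr => i _; rewrite tnth_mktuple.
case: leqP => jn; last first.
  by rewrite nth_default // size_prod_XsubC size_tuple.
have hk : (n - j < n.+1)%N by rewrite ltnS leq_subr.
have := mpoly.mroots_coeff cs (Ordinal hk); rewrite /= subKn // => ->.
congr (_ * _); rewrite esymf_meval; apply: mpoly.meval_eq => i.
by rewrite tnth_mktuple mxE.
Qed.

Lemma P2 (mu : 'I_n -> C) j :
  (\prod_(i < n) (1 - mu i *: 'X))`_j =
  if (j <= n)%N then (-1) ^+ j * esymf j (rowC mu) else 0.
Proof.
pose cs := [tuple mu i | i < n].
have -> : \prod_(i < n) (1 - mu i *: 'X) = \prod_(c <- cs) (1 - c *: 'X).
  by rewrite big_tuple; apply: eq_bigr => i _; rewrite tnth_mktuple.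
rewrite rev_prod size_tuple; case: leqP => // jn.
have -> : \prod_(c <- cs) ('X - c%:P) = \prod_(i < n) ('X - (mu i)%:P).
  by rewrite big_tuple; apply: eq_bigr => i _; rewrite tnth_mktuple.
by rewrite P1 leq_subr subKn.
Qed.


Definition Qz (z : Cn) : {poly C} :=
  1 + \sum_(k < n) ((-1) ^+ k.+1 * z ord0 k) *: 'X^(k.+1).

Lemma Qz_coef0 z : (Qz z)`_0 = 1.
Proof.
rewrite coefD coef1 coef_sum big1 ?addr0 // => k _.
by rewrite coefZ coefXn mulr0.
Qed.

Lemma Qz_coefS z (k : 'I_n) : (Qz z)`_k.+1 = (-1) ^+ k.+1 * z ord0 k.
Proof.
rewrite coefD coef1 add0r coef_sum (bigD1 k) //= coefZ coefXn eqxx mulr1.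
rewrite big1 ?addr0 // => j hj; rewrite coefZ coefXn eqSS.
suff -> : (k == j :> nat) = false by rewrite mulr0.
by apply/negbTE; apply: contra hj => /eqP e; apply/eqP/val_inj; rewrite /= e.
Qed.

Lemma Qz_coef_big z j : (n < j)%N -> (Qz z)`_j = 0.
Proof.
move=> nj; rewrite coefD coef1 coef_sum.
have -> : (j == 0%N) = false by case: j nj.
rewrite add0r big1 // => k _; rewrite coefZ coefXn.
suff -> : (j == k.+1) = false by rewrite mulr0.
by apply/negbTE; move: (ltn_ord k) nj; lia.
Qed.

Lemma sign_unit k : ((-1) ^+ k : C) \is a GRing.unit.
Proof. by rewrite unitrX // unitrN1. Qed.

Lemma Qz_inj z w : Qz z = Qz w -> z = w.
Proof.
move=> h; apply/rowP => k.
have := congr1 (fun p : {poly C} => p`_k.+1) h; rewrite /= !Qz_coefS.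
by move/(mulrI (sign_unit _)).
Qed.

Lemma Qz_pi mu : Qz (pi_n (rowC mu)) = \prod_(i < n) (1 - mu i *: 'X).
Proof.
apply/polyP => j; rewrite P2; case: j => [|j].
  by rewrite Qz_coef0 expr0 mul1r esymf0.
case: (ltnP j n) => hj.
  by rewrite (Qz_coefS _ (Ordinal hj)) pi_coord.
by rewrite Qz_coef_big // ltnS.
Qed.

Definition Pz (z : Cn) : {poly C} :=
  'X^n + \sum_(k < n) ((-1) ^+ k.+1 * z ord0 k) *: 'X^(n - k.+1).

Lemma Pz_coefn z : (Pz z)`_n = 1.
Proof.
rewrite coefD coefXn eqxx coef_sum big1 ?addr0 // => k _.
rewrite coefZ coefXn; suff -> : (n == n - k.+1)%N = false by rewrite mulr0.
by apply/negbTE; move: (ltn_ord k); lia.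
Qed.

Lemma Pz_coef z (k : 'I_n) : (Pz z)`_(n - k.+1) = (-1) ^+ k.+1 * z ord0 k.
Proof.
rewrite coefD coefXn coef_sum (bigD1 k) //= coefZ coefXn eqxx mulr1.
have -> : (n - k.+1 == n)%N = false by apply/negbTE; move: (ltn_ord k); lia.
rewrite add0r big1 ?addr0 // => j hj; rewrite coefZ coefXn.
suff -> : (n - k.+1 == n - j.+1)%N = false by rewrite mulr0.
apply/negbTE; have : (k : nat) != j.
  by apply: contra hj => /eqP e; apply/eqP/val_inj; rewrite /= e.
move: (ltn_ord k) (ltn_ord j); lia.
Qed.

Lemma Pz_coef_big z j : (n < j)%N -> (Pz z)`_j = 0.
Proof.
move=> nj; rewrite coefD coefXn coef_sum.
have -> : (j == n) = false by apply/negbTE; lia.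
rewrite add0r big1 // => k _; rewrite coefZ coefXn.
suff -> : (j == n - k.+1)%N = false by rewrite mulr0.
by apply/negbTE; move: (ltn_ord k) nj; lia.
Qed.

Lemma Qz_Pz z j : (j <= n)%N -> (Qz z)`_j = (Pz z)`_(n - j).
Proof.
case: j => [|j] hj; first by rewrite Qz_coef0 subn0 Pz_coefn.
by rewrite (Qz_coefS _ (Ordinal hj)) (Pz_coef _ (Ordinal hj)).
Qed.

Lemma Pz_size z : size (Pz z) = n.+1.
Proof.
apply/eqP; rewrite eqn_leq; apply/andP; split.
  by apply/leq_sizeP => j hj; rewrite Pz_coef_big.
rewrite ltnNge; apply/negP => /leq_sizeP /(_ n (leqnn n)).
by rewrite Pz_coefn => /eqP; rewrite oner_eq0.
Qed.

Lemma Pz_lead z : lead_coef (Pz z) = 1.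
Proof. by rewrite /lead_coef Pz_size /= Pz_coefn. Qed.

Lemma Pz_roots z : exists mu : 'I_n -> C, z = pi_n (rowC mu).
Proof.
have [rs hrs] := closed_field_poly_normal (Pz z).
rewrite Pz_lead scale1r in hrs.
have srs : size rs = n.
  by have := Pz_size z; rewrite hrs size_prod_XsubC => -[].
exists (fun i => rs`_i); apply: Qz_inj; rewrite Qz_pi.
have -> : \prod_(i < n) (1 - rs`_i *: 'X) = \prod_(c <- rs) (1 - c *: 'X).
  by rewrite (big_nth 0) big_mkord srs.
apply/polyP => j; rewrite rev_prod srs.
case: leqP => hj; first by rewrite Qz_Pz // -hrs.
exact: Qz_coef_big.
Qed.

Definition Qs : {poly mpoly.mpoly n C} :=
  1 + \sum_(k < n) ((-1) ^+ k.+1 * mpoly.mpolyX C (mpoly.mnm1 k)) *: 'X^(k.+1).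

Definition Am m : mpoly.mpoly n C := ainv Qs m.

Lemma peval_Am m z : peval (Am m) z = ainv (Qz z) m.
Proof.
pose f := mpoly.meval (fun i => z ord0 i).
have hQ : map_poly f Qs = Qz z.
  rewrite rmorphD rmorph1 rmorph_sum /=; congr (_ + _); apply: eq_bigr => k _.
  rewrite map_polyZ map_polyXn /= rmorphM rmorphXn rmorphN1.
  by congr ((_ * _) *: _); apply: mpoly.mevalXU.
have hS : map_poly f (Sser Qs m) = Sser (Qz z) m.
  rewrite /Sser rmorph_sum; apply: eq_bigr => j _.
  by rewrite rmorphXn rmorphB rmorph1 -hQ.
by rewrite /peval /Am /ainv -hS coef_map.
Qed.

End Vieta.

Section Reals.
Variable R : realType.

Lemma exists_ub (s : seq R) : all (fun x => x < 1) s ->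
  exists r : R, [/\ 0 <= r, r < 1 & forall x, x \in s -> x <= r].
Proof.
elim: s => [|a s IH] /=.
  by move=> _; exists 0; split => //; lra.
move=> /andP [a1 /IH [r [r0 r1 hr]]].
exists (Num.max r a); split.
- by rewrite le_max r0.
- by rewrite gt_max r1 a1.
- move=> x; rewrite inE => /orP [/eqP -> | /hr xr]; first by rewrite le_max lexx orbT.
  by rewrite le_max xr.
Qed.

Lemma bern (h : R) N : 0 <= h -> 1 + N%:R * h <= (1 + h) ^+ N.
Proof.
move=> h0; elim: N => [|N IH]; first by rewrite mul0r addr0 expr0.
rewrite exprS -natr1.
have : 0 <= (1 + h) ^+ N by rewrite exprn_ge0 //; lra.
have : 0 <= (N%:R : R) by rewrite ler0n.
move: IH; set P := (1 + h) ^+ N; set M := (N%:R : R) => IH hM hP.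
nra.
Qed.

Lemma geom_small (W rho : R) : 0 <= rho -> rho < 1 -> exists N, W * rho ^+ N < 1.
Proof.
move=> r0 r1; have [->|rp] := eqVneq rho 0.
  by exists 1%N; rewrite expr1 mulr0.
have rpos : 0 < rho by rewrite lt_def rp r0.
pose h := rho^-1 - 1.
have h0 : 0 < h by rewrite /h subr_gt0 invf_gt1.
have hW : 0 <= `|W| / h by rewrite divr_ge0 // ltW.
exists (Num.Def.archi_bound (`|W| / h)).
set N := Num.Def.archi_bound _.
have hN := archi_boundP hW; rewrite -/N in hN.
have hb := bern N (ltW h0).
have e : 1 + h = rho^-1 by rewrite /h addrC subrK.
rewrite e exprVn in hb.
have pN : 0 < rho ^+ N by rewrite exprn_gt0.
apply: (@le_lt_trans _ _ (`|W| * rho ^+ N)); first by rewrite ler_wpM2r ?ler_norm // ltW.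
have hWM : `|W| < N%:R * h by rewrite -ltr_pdivrMr.
have hq : rho ^+ N * (1 + N%:R * h) <= 1.
  by have := ler_wpM2l (ltW pN) hb; rewrite mulfV ?gt_eqF.
have hW0 : 0 <= `|W| by [].
move: hWM hq hW0 pN; set q := rho ^+ N; set M := (N%:R : R); move=> hWM hq hW0 pN.
nra.
Qed.

End Reals.

Section Cpart.
Variables (R : realType) (n : nat).
Local Notation C := R[i].
Local Notation Cn := 'rV[C]_n.
Local Notation "x %:C" := (real_complex R x) (at level 1, format "x %:C").

Lemma normC_real (x : C) : `|x| = (complex.Re `|x|)%:C.
Proof. by rewrite RRe_real // normr_real. Qed.

Lemma oneC : (1 : C) = (1 : R)%:C.
Proof. by rewrite rmorph1. Qed.

Lemma no_growth (W : C) (rho : R) : 0 <= rho -> rho < 1 ->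
  ~ (forall N, 1 <= W * (rho%:C) ^+ N).
Proof.
move=> r0 r1 h.
have W1 : 1 <= W by have := h 0%N; rewrite expr0 mulr1.
have Wr : W = (complex.Re W)%:C by rewrite RRe_real // ger0_real // (le_trans ler01 W1).
have [N hN] := geom_small (complex.Re W) r0 r1.
have := h N; rewrite Wr -rmorphXn -rmorphM /= oneC lecR.
by rewrite leNgt hN.
Qed.

Lemma rowC_eta (mu : Cn) : rowC (fun i => mu ord0 i) = mu.
Proof. by apply/rowP => i; rewrite mxE. Qed.

Lemma Qz_diff (z w : Cn) x :
  (Qz z).[x] - (Qz w).[x] =
  \sum_(k < n) ((-1) ^+ k.+1 * (z ord0 k - w ord0 k)) * x ^+ k.+1.
Proof.
rewrite /Qz !hornerD !horner_sum opprD addrACA subrr add0r -sumrB.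
apply: eq_bigr => k _; rewrite !hornerZ hornerXn -mulrBl -mulrBr //.
Qed.


Lemma usc (w0 : Cn) : G_n w0 -> exists r : R, r < 1 /\ exists d : C, 0 < d /\
  forall mu : Cn, open_polydisc mu ->
  (forall k, `|w0 ord0 k - pi_n mu ord0 k| < d) -> forall i, `|mu ord0 i| < r%:C.
Proof.
case=> mu0 hmu0 <-.
have [r0 [r00 r01 hr0]] : exists r0 : R, [/\ 0 <= r0, r0 < 1 &
    forall x, x \in [seq complex.Re `|mu0 ord0 i| | i <- enum 'I_n] -> x <= r0].
  apply: exists_ub; apply/allP => x /mapP [i _ ->].
  by rewrite -ltcR -normC_real -oneC; exact: hmu0.
have hb0 : forall j, `|mu0 ord0 j| <= r0%:C.
  move=> j; rewrite normC_real lecR; apply: hr0; apply/mapP; exists j => //.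
  by rewrite mem_enum.
pose r : R := (1 + r0) / 2.
have rr0 : r0 < r by rewrite /r; lra.
have r1 : r < 1 by rewrite /r; lra.
have rpos : 0 < r by lra.
have rinv : r^-1 <= 2.
  by rewrite -[r^-1]mul1r ler_pdivrMr // /r; lra.
pose c : R := 1 - r0 / r.
have cpos : 0 < c by rewrite /c subr_gt0 ltr_pdivrMr // mul1r.
pose A : C := n%:R * 2 ^+ n.
have A0 : 0 <= A by rewrite /A mulr_ge0 ?exprn_ge0 ?ler0n.
pose d : C := (c%:C) ^+ n / (A + 1).
have A1 : 0 < A + 1 by rewrite ltr_wpDl.
have cn : 0 < c%:C ^+ n by rewrite exprn_gt0 // ltcR.
have key : A * d < c%:C ^+ n.
  rewrite /d mulrCA -[X in _ < X]mulr1 ltr_pM2l //.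
  by rewrite ltr_pdivrMr // mul1r ltrDl ltr01.
exists r; split => //; exists d; split; first by rewrite /d divr_gt0.
move=> mu hmu hd i.
rewrite normC_real ltcR.
case: (ltP (complex.Re `|mu ord0 i|) r) => // hge; exfalso.
have hgeC : r%:C <= `|mu ord0 i| by rewrite normC_real lecR.
set mi := mu ord0 i in hgeC.
have rC0 : 0 < r%:C by rewrite ltcR.
have mi0 : mi != 0 by rewrite -normr_gt0 (lt_le_trans rC0 hgeC).
pose x := mi^-1.
have hx : `|x| <= 2.
  apply: (@le_trans _ _ (r%:C)^-1).
    rewrite /x normfV lef_pV2 // posrE ?normr_gt0 //.
  by rewrite -fmorphV /= -[2]/(2%:R) -(rmorph_nat (real_complex R)) lecR.
have hx1 : 0 <= `|x| by [].
have Qw : (Qz (pi_n mu)).[x] = 0.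
  rewrite -{1}(rowC_eta mu) Qz_pi horner_prod (bigD1 i) //=.
  by rewrite hornerD hornerN hornerZ hornerX hornerC -/mi /x mulfV // subrr mul0r.
have Q0 : c%:C ^+ n <= `|(Qz (pi_n mu0)).[x]|.
  rewrite -{1}(rowC_eta mu0) Qz_pi horner_prod normr_prod.
  have -> : c%:C ^+ n = \prod_(j < n) c%:C by rewrite prodr_const card_ord.
  apply: ler_prod => j _; rewrite ltW ?ltcR //=.
  rewrite hornerD hornerN hornerZ hornerX hornerC.
  apply: le_trans (lerB_normD _ _); rewrite normr1 normrN normrM.
  rewrite /c rmorphB rmorph1 /= lerD2l lerN2.
  rewrite rmorphM fmorphV /=; apply: ler_pM => //.
  rewrite /x normfV lef_pV2 // posrE ?normr_gt0 //.
have Qd : `|(Qz (pi_n mu0)).[x] - (Qz (pi_n mu)).[x]| <= A * d.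
  rewrite Qz_diff; apply: (le_trans (ler_norm_sum _ _ _)).
  apply: (@le_trans _ _ (\sum_(k < n) d * 2 ^+ n)).
    apply: ler_sum => k _; rewrite !normrM normrX normrN1 expr1n mul1r normrX.
    apply: ler_pM; rewrite ?exprn_ge0 //; first exact: ltW (hd k).
    apply: (@le_trans _ _ (2 ^+ k.+1)); first by apply: lerXn2r; rewrite ?nnegrE.
    by rewrite ler_eXn2l ?ltr1n.
  by rewrite sumr_const card_ord -[_ *+ n]mulr_natl /A mulrCA mulrC.
move: Qd; rewrite Qw subr0 => Qd.
have := le_lt_trans (le_trans Q0 Qd) key.
by rewrite ltxx.
Qed.


Lemma uniform_r (K : set Cn) : compact K -> K `<=` @G_n R n ->
  exists r : R, [/\ 0 <= r, r < 1 & forall mu : Cn, open_polydisc mu ->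
    K (pi_n mu) -> forall i, `|mu ord0 i| < r%:C].
Proof.
move=> cK KG.
have hch : forall w0 : Cn, exists p : R * C, G_n w0 -> [/\ p.1 < 1, 0 < p.2 &
    forall mu : Cn, open_polydisc mu ->
    (forall k, `|w0 ord0 k - pi_n mu ord0 k| < p.2) -> forall i, `|mu ord0 i| < p.1%:C].
  move=> w0; case: (pselect (G_n w0)) => hw; last by exists (0, 0).
  by have [r [r1 [d [d0 h]]]] := usc hw; exists (r, d).
have [f hf] := choice hch.
rewrite compact_cover in cK.
have cov0 : K `<=` cover K (fun w0 => interior (ball w0 (f w0).2)).
  move=> w Kw; have [_ d0 _] := hf w (KG w Kw).
  by exists w => //; exact: nbhsx_ballx.
have [D' sD' cov] := cK Cn K (fun w0 => interior (ball w0 (f w0).2))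
  (fun _ _ => open_interior _) cov0.
have hall : all (fun x => x < 1) [seq (f w).1 | w <- finmap.enum_fset D'].
  apply/allP => x /mapP [w wD ->].
  have wK : K w by have := sD' w wD; rewrite in_setE.
  by have [] := hf w (KG w wK).
have [r [r0 r1 hr]] := exists_ub hall.
exists r; split => // mu hmu Kmu i.
have [w wD hw] := cov _ Kmu.
have hb := interior_subset hw.
have wK : K w by have := sD' w wD; rewrite in_setE.
have [h1 h2 h3] := hf w (KG w wK).
apply: (lt_le_trans (h3 mu hmu _ i)).
  move=> k; move: hb; rewrite /ball /= => -[_ H]; exact: H ord0 k.
by rewrite lecR; apply: hr; apply/mapP; exists w.
Qed.

End Cpart.

Unset Implicit Arguments. Set Strict Implicit.

Theorem mainTheorem5 (R : realType) (n : nat) (L : set 'rV[R[i]]_n) :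
  distinguished_variety L -> poly_convex L.
Proof.
move=> [S [LE _]] K KL cK z hz.
have KG : K `<=` @G_n R n by move=> w /KL; rewrite LE => -[].
rewrite LE; split.
  move=> p Sp.
  have : `|peval p z| <= ((0 : R)%:C)%C.
    apply: hz => w Kw; have := KL w Kw; rewrite LE => -[Zw _].
    by rewrite (Zw p Sp) normr0 rmorph0.
  by rewrite rmorph0 normr_le0 => /eqP.
have [r [r0 r1 hr]] := uniform_r cK KG.
pose rho : R := (1 + r) / 2.
have rrho : r < rho by rewrite /rho; lra.
have rho1 : rho < 1 by rewrite /rho; lra.
have rho0 : 0 <= rho by rewrite /rho; lra.
pose D : R := (rho / (rho - r)) ^+ n.
have bnd : forall m, `|peval (@Am R n m) z| <= ((D * rho ^+ m)%:C)%C.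
  move=> m; apply: hz => w Kw.
  have [mu hmu emu] := KG w Kw.
  rewrite -emu peval_Am -{1}(rowC_eta mu) Qz_pi.
  rewrite rmorphM !rmorphXn /= fmorph_div rmorphB /=.
  apply: ainv_prod_bound; first by rewrite ler0c.
    by rewrite ltcR.
  move=> i; apply: ltW; apply: hr => //.
  by rewrite emu.
have [lam elam] := Pz_roots z.
exists (rowC lam); last by rewrite elam.
move=> i; rewrite mxE.
case: (boolP (`|lam i| < 1)) => // hli; exfalso.
have hl1 : 1 <= `|lam i| by rewrite real_leNgt ?real1 ?normr_real.
have hb : forall m, `|ainv (\prod_(j < n) (1 - lam j *: 'X)) m| <=
    (D%:C)%C * ((rho%:C)%C) ^+ m.
  move=> m; have := bnd m; rewrite peval_Am elam Qz_pi.
  by rewrite -rmorphXn -rmorphM.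
have rC0 : 0 <= (rho%:C)%C by rewrite ler0c.
have rC1 : (rho%:C)%C <= 1 by rewrite oneC lecR ltW.
have [W hW] := big_root_lower hl1 rC0 rC1 hb.
exact: no_growth rho0 rho1 hW.
Qed.
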